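(* Let $s\ge 0$ be a fixed integer (independent of $N$). For every integer $N$ with $s<N-2$, set $n=N-s$ and let $\mathcal{X}_n=\{x_j\}_{j=0}^n$ be any subset with $n+1$ elements of the Chebyshev points of the second kind $\{\cos\frac{k\pi}{N}\}_{k=0}^N$, ordered so that $x_0>x_1>\dots>x_n$. Then the family $(\mathcal{X}_n)$ is a family of well-spaced points with constants $C=\frac{\pi^2(s+1)}{2}$ and $R=\frac{(s+1)(s+3)\pi^2}{4}$; that is, for every such $\mathcal{X}_n$: (1) $\frac{x_{k+1}-x_k}{x_{k+1}-x_j}\le \frac{C}{k+1-j}$ for $0\le j\le k$, $0\le k\le n-1$; (2) $\frac{x_{k+1}-x_k}{x_j-x_k}\le\frac{C}{j-k}$ for $k+1\le j\le n$, $0\le k\le n-1$; (3) $\frac1R\le \frac{x_{k+1}-x_k}{x_k-x_{k-1}}\le R$ for $1\le k\le n-1$. Moreover, the Lebesgue constant of Berrut's rational interpolant on $\mathcal{X}_n$ satisfies $$\Lambda_n\le\Big(\frac{(s+1)(s+3)\pi^2}{4}+1\Big)\big(1+\pi^2(s+1)\ln(N-s)\big).$$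
   Context: Berrut's rational interpolant on distinct nodes $x_0,\dots,x_n$ has basis functions $\ell_i(x)=\dfrac{(-1)^i/(x-x_i)}{\sum_{j=0}^n (-1)^j/(x-x_j)}$, $i=0,\dots,n$. Its Lebesgue constant on $[-1,1]$ is $\Lambda_n=\max_{x\in[-1,1]}\sum_{i=0}^n|\ell_i(x)|$. A family of ordered node sets $(\mathcal{X}_n)_n$ is called well-spaced if there exist constants $C,R\ge 1$ independent of $n$ such that conditions (1)–(3) in the claim hold for every set in the family. *)

(* Defs.v *)
From Stdlib Require Import Reals Lra Lia.
From Coquelicot Require Import Coquelicot.
Open Scope R_scope.

Fixpoint is_nodeb (x : nat -> R) (n : nat) (t : R) : bool :=
  match n with
  | O => if Req_EM_T t (x O) then true else false
  | S m => if Req_EM_T t (x (S m)) then true else is_nodeb x m t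
  end.

(* Berrut's basis function l_i on the nodes x 0 > ... > x n:
   l_i(t) = ((-1)^i/(t - x_i)) / sum_{j=0}^n (-1)^j/(t - x_j)  for t not a node,
   extended (continuously, i.e. by the interpolation property) to the nodes:
   l_i(x_i) = 1 and l_i(x_m) = 0 for m <> i. *)
Definition berrut_basis (x : nat -> R) (n i : nat) (t : R) : R :=
  if Req_EM_T t (x i) then 1
  else if is_nodeb x n t then 0
  else ((-1) ^ i / (t - x i)) / sum_f_R0 (fun j => (-1) ^ j / (t - x j)) n.

Definition lebesgue_function (x : nat -> R) (n : nat) (t : R) : R :=
  sum_f_R0 (fun i => Rabs (berrut_basis x n i t)) n.

Definition lebesgue_constant (x : nat -> R) (n : nat) : Rbar :=
  Lub_Rbar (fun y => exists t, -1 <= t <= 1 /\ y = lebesgue_function x n t).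

(* Main.v *)
Require Import Defs.
From Stdlib Require Import Reals Lra Lia Psatz Arith Classical.
From Stdlib Require Import IndefiniteDescription.
From Coquelicot Require Import Coquelicot.
Open Scope R_scope.

Lemma PI_gt_3 : 3 < PI.
Proof.
  assert (H := pre_cos_bound (3/2) 1 ltac:(lra) ltac:(lra)).
  destruct H as [H _]. unfold cos_approx in H. simpl in H. unfold cos_term in H. simpl in H.
  assert (0 < cos (3/2)) by (unfold INR in H; lra).
  assert (3/2 < PI/2) by (apply PI2_lower_bound; lra). lra.
Qed.

Lemma sin_le_id y : 0 <= y -> sin y <= y.
Proof. intros H. destruct (Req_dec y 0) as [->|]. rewrite sin_0; lra.
  left; apply sin_lt_x; lra. Qed.

Lemma sin_lb3 a : 0 <= a -> a <= 2 -> a - a^3/6 <= sin a.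
Proof.
  intros H1 H2. assert (H := pre_sin_bound a 1 H1 ltac:(lra)). destruct H as [H _].
  unfold sin_approx in H. simpl in H. unfold sin_term in H. simpl in H. unfold INR in H.
  assert (a^5/120 - a^7/5040 >= 0).
  { assert (a^7 = a^5 * a^2) by ring. rewrite H0.
    assert (0 <= a^5) by (apply pow_le; lra). assert (a^2 <= 4) by nra. nra. }
  nra.
Qed.

Lemma cos_lb2 a : 0 <= a -> a <= 2 -> 1 - a^2/2 <= cos a.
Proof.
  intros H1 H2. assert (H := pre_cos_bound a 1 ltac:(lra) ltac:(lra)). destruct H as [H _].
  unfold cos_approx in H. simpl in H. unfold cos_term in H. simpl in H. unfold INR in H.
  assert (a^4/24 - a^6/720 >= 0).
  { assert (a^6 = a^4 * a^2) by ring. rewrite H0.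
    assert (0 <= a^4) by (apply pow_le; lra). assert (a^2 <= 4) by nra. nra. }
  nra.
Qed.

Lemma jordan y : 0 <= y -> y <= PI/2 -> 2/PI*y <= sin y.
Proof.
  intros H1 H2. assert (HP := PI_gt_3). assert (HP4 := PI_4).
  destruct (Rle_dec y (6/5)) as [Hy|Hy].
  - assert (Hs := sin_lb3 y H1 ltac:(lra)).
    assert (2/PI <= 2/3). { apply Rmult_le_compat_l; [lra|]. apply Rinv_le_contravar; lra. }
    assert (y^3/6 <= y/3 * 1) by nra. nra.
  - set (z := PI/2 - y). assert (Hz : y = PI/2 - z) by (unfold z; lra).
    assert (0 <= z <= 4/5) by (unfold z; lra).
    rewrite Hz, sin_shift. assert (Hc := cos_lb2 z ltac:(lra) ltac:(lra)).
    assert (2/PI*(PI/2 - z) = 1 - 2/PI*z) by (field; lra). rewrite H0.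
    assert (2/PI >= 1/2). { unfold Rdiv. rewrite !Rmult_1_l. apply Rle_ge.
      replace (1 * /2) with (/2) by ring. 
      assert (/ 2 = 2 * / 4) by field. rewrite H3. apply Rmult_le_compat_l; [lra|]. apply Rinv_le_contravar; lra. }
    nra.
Qed.

Definition uu (N : nat) := PI / (2 * INR N).
Definition SS (N m : nat) := INR (Nat.min m (2 * N - m)).

Lemma uu_pos N : (0 < N)%nat -> 0 < uu N.
Proof. intros. unfold uu. assert (0 < INR N) by (apply lt_0_INR; lia).
  assert (HP := PI_RGT_0). apply Rdiv_lt_0_compat; lra. Qed.

Lemma uu_N N : (0 < N)%nat -> INR N * uu N = PI / 2.
Proof. intros. unfold uu. assert (0 < INR N) by (apply lt_0_INR; lia). field. lra. Qed.

Lemma sin_mu_bounds N m : (0 < N)%nat -> (m <= 2 * N)%nat ->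
  2 / PI * SS N m * uu N <= sin (INR m * uu N) <= SS N m * uu N.
Proof.
  intros HN Hm. assert (Hu := uu_pos N HN). assert (HuN := uu_N N HN).
  assert (HP := PI_gt_3). unfold SS.
  destruct (le_lt_dec m N) as [H|H].
  - rewrite Nat.min_l by lia.
    assert (INR m <= INR N) by (apply le_INR; lia).
    assert (0 <= INR m) by apply pos_INR.
    assert (INR m * uu N <= PI/2) by nra.
    split.
    + rewrite Rmult_assoc. apply jordan; nra.
    + apply sin_le_id; nra.
  - rewrite Nat.min_r by lia.
    assert (Hx : INR m * uu N = PI - INR (2*N - m) * uu N).
    { rewrite minus_INR by lia. rewrite mult_INR. simpl (INR 2). nra. }
    rewrite Hx, sin_PI_x.
    assert (INR (2*N-m) <= INR N) by (apply le_INR; lia).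
    assert (0 <= INR (2*N - m)) by apply pos_INR.
    assert (INR (2*N-m) * uu N <= PI/2) by nra.
    split.
    + rewrite Rmult_assoc. apply jordan; nra.
    + apply sin_le_id; nra.
Qed.

Lemma cos_idx N k : (0 < N)%nat -> INR k * PI / INR N = 2 * INR k * uu N.
Proof. intros. unfold uu. assert (0 < INR N) by (apply lt_0_INR; lia). field. lra. Qed.

Lemma Delta_bounds N p q : (0 < N)%nat -> (p <= q)%nat -> (q <= N)%nat ->
  8 / PI^2 * SS N (p+q) * INR (q-p) * uu N ^ 2
   <= cos (INR p * PI / INR N) - cos (INR q * PI / INR N)
   <= 2 * SS N (p+q) * INR (q-p) * uu N ^ 2.
Proof.
  intros HN Hpq HqN. rewrite !cos_idx by lia. rewrite form2.
  set (u := uu N).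
  assert (E1 : (2 * INR p * u - 2 * INR q * u) / 2 = - (INR (q-p) * u)).
  { rewrite minus_INR by lia. field. }
  assert (E2 : (2 * INR p * u + 2 * INR q * u) / 2 = INR (p+q) * u).
  { rewrite plus_INR. field. }
  rewrite E1, E2, sin_neg.
  assert (Hu := uu_pos N HN). assert (HuN := uu_N N HN). fold u in Hu, HuN.
  assert (HP := PI_gt_3).
  destruct (sin_mu_bounds N (p+q) HN ltac:(lia)) as [A1 A2]. fold u in A1, A2.
  assert (INR (q-p) <= INR N) by (apply le_INR; lia).
  assert (0 <= INR (q-p)) by apply pos_INR.
  assert (B1 : 2/PI * (INR (q-p) * u) <= sin (INR (q-p) * u)) by (apply jordan; nra).
  assert (B2 : sin (INR (q-p) * u) <= INR (q-p) * u) by (apply sin_le_id; nra).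
  assert (0 <= SS N (p+q)) by (unfold SS; apply pos_INR).
  assert (0 < 2/PI) by (apply Rdiv_lt_0_compat; lra).
  assert (E3 : 8 / PI^2 * SS N (p+q) * INR (q-p) * u^2 = 2 * ((2/PI * SS N (p+q) * u) * (2/PI * (INR (q-p) * u)))) by (field; lra).
  assert (0 <= 2/PI*SS N (p+q)*u) by (apply Rmult_le_pos; [apply Rmult_le_pos|]; lra).
  assert (0 <= 2/PI*(INR (q-p)*u)) by (apply Rmult_le_pos; [lra| apply Rmult_le_pos; lra]).
  rewrite E3. split.
  - assert (0 <= 2/PI*SS N (p+q)*u) by (apply Rmult_le_pos; [apply Rmult_le_pos|]; lra).
    assert (0 <= 2/PI*(INR (q-p)*u)) by (apply Rmult_le_pos; nra).
    assert ((2/PI*SS N (p+q)*u) * (2/PI*(INR (q-p)*u)) <= sin (INR (p+q) * u) * sin (INR (q-p) * u)).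
    { apply Rmult_le_compat; lra. }
    lra.
  - assert (0 <= sin (INR (q-p) * u)) by lra.
    assert (0 <= sin (INR (p+q) * u)) by lra.
    assert (sin (INR (p+q) * u) * sin (INR (q-p) * u) <= (SS N (p+q) * u) * (INR (q-p) * u)).
    { apply Rmult_le_compat; lra. }
    nra.
Qed.

Open Scope nat_scope.

Lemma I2 N s pk pk1 pj k j :
  pk < pk1 -> pk1 <= pj -> pj <= N -> pk1 - pk <= s + 1 -> j - k <= pj - pk ->
  Nat.min (pk+pk1) (2*N - (pk+pk1)) * (pk1 - pk) * (j - k)
   <= 2 * (s+1) * Nat.min (pk + pj) (2*N - (pk+pj)) * (pj - pk).
Proof.
  intros. assert (Nat.min (pk+pk1) (2*N - (pk+pk1)) <= 2 * Nat.min (pk + pj) (2*N - (pk+pj))) by lia.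
  set (a := Nat.min (pk+pk1) (2*N - (pk+pk1))) in *. set (c:= Nat.min (pk + pj) (2*N - (pk+pj))) in *.
  set (g := pk1 - pk) in *. set (G := pj - pk) in *. set (m := j - k) in *.
  assert (a * g <= (2*c) * (s+1)) by (apply Nat.mul_le_mono; lia).
  assert (a * g * m <= (2*c)*(s+1) * G) by (apply Nat.mul_le_mono; lia).
  replace (2 * (s+1) * c * G) with (2*c*(s+1)*G) by ring. assumption.
Qed.

Lemma I1 N s pj pk pk1 k j :
  pj <= pk -> pk < pk1 -> pk1 <= N -> pk1 - pk <= s + 1 -> k + 1 - j <= pk1 - pj ->
  Nat.min (pk+pk1) (2*N - (pk+pk1)) * (pk1 - pk) * (k + 1 - j)
   <= 2 * (s+1) * Nat.min (pj + pk1) (2*N - (pj+pk1)) * (pk1 - pj).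
Proof.
  intros. assert (Nat.min (pk+pk1) (2*N - (pk+pk1)) <= 2 * Nat.min (pj + pk1) (2*N - (pj+pk1))) by lia.
  set (a := Nat.min (pk+pk1) (2*N - (pk+pk1))) in *. set (c:= Nat.min (pj + pk1) (2*N - (pj+pk1))) in *.
  set (g := pk1 - pk) in *. set (G := pk1 - pj) in *. set (m := k+1-j) in *.
  assert (a * g <= (2*c) * (s+1)) by (apply Nat.mul_le_mono; lia).
  assert (a * g * m <= (2*c)*(s+1) * G) by (apply Nat.mul_le_mono; lia).
  replace (2 * (s+1) * c * G) with (2*c*(s+1)*G) by ring. assumption.
Qed.

Lemma I3aux s a g0 : 1 <= a -> 1 <= g0 -> a + g0 + (s+1) <= (s+3) * a * g0.
Proof.
  intros. assert (a <= a * g0) by (rewrite <- (Nat.mul_1_r a) at 1; apply Nat.mul_le_mono; lia).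
  assert (g0 <= a * g0) by (rewrite <- (Nat.mul_1_l g0) at 1; apply Nat.mul_le_mono; lia).
  replace ((s+3)*a*g0) with (a*g0 + a*g0 + (s+1)*(a*g0)) by ring.
  assert (s+1 <= (s+1)*(a*g0)) by (rewrite <- (Nat.mul_1_r (s+1)) at 1; apply Nat.mul_le_mono; lia).
  lia.
Qed.

Lemma I3 N s p0 p1 p2 :
  p0 < p1 -> p1 < p2 -> p2 <= N -> p1 - p0 <= s + 1 -> p2 - p1 <= s + 1 ->
  Nat.min (p1+p2) (2*N - (p1+p2)) * (p2 - p1)
   <= (s+1)*(s+3) * Nat.min (p0 + p1) (2*N - (p0+p1)) * (p1 - p0) /\
  Nat.min (p0+p1) (2*N - (p0+p1)) * (p1 - p0)
   <= (s+1)*(s+3) * Nat.min (p1 + p2) (2*N - (p1+p2)) * (p2 - p1).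
Proof.
  intros. set (a := Nat.min (p0+p1) (2*N - (p0+p1))). set (b := Nat.min (p1+p2) (2*N - (p1+p2))).
  assert (b <= a + (p1 - p0) + (p2 - p1)) by (unfold a, b; lia).
  assert (a <= b + (p1 - p0) + (p2 - p1)) by (unfold a, b; lia).
  assert (1 <= a) by (unfold a; lia). assert (1 <= b) by (unfold b; lia).
  set (g0 := p1 - p0) in *. set (g1 := p2 - p1) in *.
  assert (1 <= g0) by (unfold g0; lia). assert (1 <= g1) by (unfold g1; lia).
  split.
  - assert (b * g1 <= (a + g0 + (s+1)) * (s+1)) by (apply Nat.mul_le_mono; lia).
    assert (a + g0 + (s+1) <= (s+3) * a * g0) by (apply I3aux; lia).
    assert ((a + g0 + (s+1)) * (s+1) <= ((s+3) * a * g0) * (s+1)) by (apply Nat.mul_le_mono; lia).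
    replace ((s+1)*(s+3)*a*g0) with ((s+3)*a*g0*(s+1)) by ring. lia.
  - assert (a * g0 <= (b + g1 + (s+1)) * (s+1)) by (apply Nat.mul_le_mono; lia).
    assert (b + g1 + (s+1) <= (s+3) * b * g1) by (apply I3aux; lia).
    assert ((b + g1 + (s+1)) * (s+1) <= ((s+3) * b * g1) * (s+1)) by (apply Nat.mul_le_mono; lia).
    replace ((s+1)*(s+3)*b*g1) with ((s+3)*b*g1*(s+1)) by ring. lia.
Qed.

Open Scope R_scope.

Definition hyp (N s : nat) (x : nat -> R) (p : nat -> nat) : Prop :=
  (s + 2 < N)%nat /\
  (forall j, (j <= N - s)%nat -> (p j <= N)%nat /\ x j = cos (INR (p j) * PI / INR N)) /\
  (forall i d, (i + d <= N - s)%nat -> (p i + d <= p (i + d))%nat) /\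
  (forall j, (j <= N - s)%nat -> (j <= p j <= j + s)%nat).

Lemma get_p (s N : nat) (x : nat -> R) :
  (s + 2 < N)%nat ->
  (forall j, (j <= N - s)%nat ->
     exists k, (k <= N)%nat /\ x j = cos (INR k * PI / INR N)) ->
  (forall j, (j < N - s)%nat -> x (S j) < x j) ->
  exists p, hyp N s x p.
Proof.
  intros HsN Hx Hord.
  destruct (functional_choice (fun j k => (j <= N - s)%nat -> (k <= N)%nat /\ x j = cos (INR k * PI / INR N))) as [p Hp].
  { intros j. destruct (le_lt_dec j (N - s)) as [h|h].
    - destruct (Hx j h) as [k Hk]. exists k; auto.
    - exists 0%nat; intros; lia. }
  assert (Hinc : forall j, (j < N - s)%nat -> (p j < p (S j))%nat).
  { intros j hj. destruct (Hp j ltac:(lia)) as [A1 A2]. destruct (Hp (S j) ltac:(lia)) as [B1 B2].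
    destruct (le_lt_dec (p (S j)) (p j)) as [h|h]; [|exact h]. exfalso.
    assert (HN : 0 < INR N) by (apply lt_0_INR; lia).
    assert (HP := PI_RGT_0).
    assert (forall k, (k <= N)%nat -> 0 <= INR k * PI / INR N <= PI).
    { intros k hk. assert (INR k <= INR N) by (apply le_INR; lia). assert (0 <= INR k) by apply pos_INR.
      split. apply Rmult_le_pos; [nra| left; apply Rinv_0_lt_compat; lra].
      apply Rmult_le_reg_r with (INR N); [lra|]. unfold Rdiv. rewrite Rmult_assoc, Rinv_l by lra. nra. }
    destruct (H _ A1), (H _ B1).
    assert (cos (INR (p j) * PI / INR N) <= cos (INR (p (S j)) * PI / INR N)).
    { apply cos_decr_1; try lra. apply Rmult_le_compat_r; [left; apply Rinv_0_lt_compat; lra|].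
      apply Rmult_le_compat_r; [lra|]. apply le_INR; exact h. }
    specialize (Hord j hj). lra. }
  assert (Hmon : forall i d, (i + d <= N - s)%nat -> (p i + d <= p (i + d))%nat).
  { intros i d; induction d as [|d IH]; intros h.
    - rewrite !Nat.add_0_r; lia.
    - specialize (IH ltac:(lia)). specialize (Hinc (i + d)%nat ltac:(lia)).
      replace (i + S d)%nat with (S (i + d)) by lia. lia. }
  exists p. split; [exact HsN|]. split; [exact Hp|]. split; [exact Hmon|].
  intros j hj. split.
  - specialize (Hmon 0%nat j ltac:(lia)). simpl in Hmon. lia.
  - specialize (Hmon j (N - s - j)%nat ltac:(lia)). replace (j + (N - s - j))%nat with (N - s)%nat in Hmon by lia.
    destruct (Hp (N - s)%nat ltac:(lia)). lia.
Qed.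

Lemma div_le a b c d : 0 < b -> 0 < d -> a * d <= c * b -> a / b <= c / d.
Proof. intros. apply Rmult_le_reg_r with (b*d). nra.
  replace (a/b*(b*d)) with (a*d) by (field; lra). replace (c/d*(b*d)) with (c*b) by (field; lra). lra. Qed.

Lemma ratio_main (Sb g m Sc G K u h e : R) :
  0 < u -> 0 < Sc * G -> 0 < m -> Sb * g * m <= K * (Sc * G) -> 0 <= h ->
  h <= 2 * Sb * g * u ^ 2 -> 8 / PI ^ 2 * Sc * G * u ^ 2 <= e ->
  h / e <= (PI ^ 2 / 4 * K) / m.
Proof.
  intros Hu HS Hm Hint Hh HA HB. assert (HP := PI_gt_3).
  set (B := 8 / PI ^ 2 * Sc * G * u ^ 2) in *.
  assert (HBp : 0 < B). { unfold B. assert (0 < 8/PI^2) by (apply Rdiv_lt_0_compat; [lra| apply pow_lt; lra]).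
    assert (0 < u^2) by (apply pow_lt; lra). replace (8 / PI ^ 2 * Sc * G * u ^ 2) with (8/PI^2 * (Sc*G) * u^2) by ring.
    apply Rmult_lt_0_compat; [apply Rmult_lt_0_compat|]; lra. }
  apply Rle_trans with (h / B).
  - unfold Rdiv. apply Rmult_le_compat_l; [lra|]. apply Rinv_le_contravar; lra.
  - apply div_le; [lra|lra|].
    assert (h * m <= 2 * Sb * g * u^2 * m) by (apply Rmult_le_compat_r; lra).
    assert (E : PI ^ 2 / 4 * K * B = 2 * (K * (Sc * G)) * u ^ 2) by (unfold B; field; lra).
    rewrite E. assert (0 < u^2) by (apply pow_lt; lra).
    assert (2 * Sb * g * u ^ 2 * m = 2 * (Sb * g * m) * u^2) by ring. nra.
Qed.

Lemma Dx N s x p i j : hyp N s x p -> (i <= j)%nat -> (j <= N - s)%nat ->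
  8 / PI^2 * SS N (p i + p j) * INR (p j - p i) * uu N ^ 2 <= x i - x j
   <= 2 * SS N (p i + p j) * INR (p j - p i) * uu N ^ 2.
Proof.
  intros [HsN [Hp [Hm Hb]]] hij hj.
  destruct (Hp i ltac:(lia)) as [A1 ->]. destruct (Hp j ltac:(lia)) as [B1 ->].
  apply Delta_bounds; try lia. specialize (Hm i (j - i)%nat ltac:(lia)).
  replace (i + (j - i))%nat with j in Hm by lia. lia.
Qed.

Lemma hyp_p N s x p i j : hyp N s x p -> (i <= j)%nat -> (j <= N - s)%nat ->
  (p i + (j - i) <= p j)%nat /\ (p j <= N)%nat /\ (i <= p i <= i + s)%nat /\ (j <= p j <= j + s)%nat.
Proof.
  intros [HsN [Hp [Hm Hb]]] hij hj. specialize (Hm i (j - i)%nat ltac:(lia)).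
  replace (i + (j - i))%nat with j in Hm by lia. destruct (Hp j hj).
  assert (Hb1 := Hb i ltac:(lia)). assert (Hb2 := Hb j hj). lia.
Qed.

Lemma SSpos N s x p i j : hyp N s x p -> (i < j)%nat -> (j <= N - s)%nat ->
  0 < SS N (p i + p j) * INR (p j - p i).
Proof.
  intros H hij hj. destruct (hyp_p N s x p i j H ltac:(lia) hj) as [A [B _]].
  unfold SS. rewrite <- mult_INR. apply lt_0_INR.
  assert (0 < Nat.min (p i + p j) (2 * N - (p i + p j)))%nat by lia.
  assert (0 < p j - p i)%nat by lia. nia.
Qed.

Lemma LBpos a b u : 0 < a * b -> 0 < u -> 0 < 8 / PI^2 * a * b * u^2.
Proof. intros. assert (HP := PI_gt_3).
  replace (8 / PI ^ 2 * a * b * u ^ 2) with (8/PI^2 * (a * b) * u^2) by ring.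
  apply Rmult_lt_0_compat; [apply Rmult_lt_0_compat|]; try lra.
  apply Rdiv_lt_0_compat; [lra| apply pow_lt; lra]. apply pow_lt; lra. Qed.

Ltac rinr H := rewrite ?mult_INR, ?plus_INR in H; simpl (INR 1) in H; simpl (INR 2) in H; simpl (INR 3) in H.

Lemma cond1 N s x p : hyp N s x p ->
  forall k j, (k <= N - s - 1)%nat -> (j <= k)%nat ->
  (x (S k) - x k) / (x (S k) - x j) <= PI ^ 2 * (INR s + 1) / 2 / INR (k + 1 - j).
Proof.
  intros H k j hk hj. assert (HN : (s + 2 < N)%nat) by (destruct H; lia).
  assert (Hu := uu_pos N ltac:(lia)).
  destruct (Dx N s x p k (S k) H ltac:(lia) ltac:(lia)) as [A1 A2].
  destruct (Dx N s x p j (S k) H ltac:(lia) ltac:(lia)) as [B1 B2].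
  assert (P1 := SSpos N s x p j (S k) H ltac:(lia) ltac:(lia)).
  destruct (hyp_p N s x p j (S k) H ltac:(lia) ltac:(lia)) as [C1 [C2 [C3 C4]]].
  destruct (hyp_p N s x p k (S k) H ltac:(lia) ltac:(lia)) as [D1 [D2 [D3 D4]]].
  assert (HP := PI_gt_3).
  assert (Be : 0 < x j - x (S k)).
  { eapply Rlt_le_trans; [|exact B1]. rewrite Rmult_assoc.
    replace (8 / PI ^ 2 * SS N (p j + p (S k)) * (INR (p (S k) - p j) * uu N ^ 2)) with
      (8/PI^2 * (SS N (p j + p (S k)) * INR (p (S k) - p j)) * uu N^2) by ring.
    apply Rmult_lt_0_compat; [apply Rmult_lt_0_compat|]; try lra.
    apply Rdiv_lt_0_compat; [lra| apply pow_lt; lra]. apply pow_lt; lra. }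
  replace ((x (S k) - x k) / (x (S k) - x j)) with ((x k - x (S k)) / (x j - x (S k))) by (field; lra).
  replace (PI ^ 2 * (INR s + 1) / 2) with (PI^2/4 * (2 * (INR s + 1))) by field.
  assert (Hm : 0 < INR (k + 1 - j)) by (apply lt_0_INR; lia).
  apply (ratio_main (SS N (p k + p (S k))) (INR (p (S k) - p k)) _ (SS N (p j + p (S k))) (INR (p (S k) - p j)) _ (uu N));
    try lra.
  - destruct (hyp_p N s x p j k H ltac:(lia) ltac:(lia)) as [E1 _].
    assert (Hi := I1 N s (p j) (p k) (p (S k)) k j ltac:(lia) ltac:(lia) ltac:(lia) ltac:(lia) ltac:(lia)).
    apply le_INR in Hi. unfold SS. rinr Hi. lra.
  - assert (0 < 8 / PI^2 * SS N (p k + p (S k)) * INR (p (S k) - p k) * uu N^2).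
    { apply LBpos; [apply (SSpos N s x p k (S k) H); lia|lra]. }
    lra.
Qed.

Lemma cond2 N s x p : hyp N s x p ->
  forall k j, (k <= N - s - 1)%nat -> (k + 1 <= j)%nat -> (j <= N - s)%nat ->
  (x (S k) - x k) / (x j - x k) <= PI ^ 2 * (INR s + 1) / 2 / INR (j - k).
Proof.
  intros H k j hk hj hjn. assert (HN : (s + 2 < N)%nat) by (destruct H; lia).
  assert (Hu := uu_pos N ltac:(lia)).
  destruct (Dx N s x p k (S k) H ltac:(lia) ltac:(lia)) as [A1 A2].
  destruct (Dx N s x p k j H ltac:(lia) ltac:(lia)) as [B1 B2].
  destruct (hyp_p N s x p k j H ltac:(lia) ltac:(lia)) as [C1 [C2 [C3 C4]]].
  destruct (hyp_p N s x p k (S k) H ltac:(lia) ltac:(lia)) as [D1 [D2 [D3 D4]]].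
  destruct (hyp_p N s x p (S k) j H ltac:(lia) ltac:(lia)) as [E1 _].
  assert (HP := PI_gt_3).
  assert (Be : 0 < x k - x j).
  { eapply Rlt_le_trans; [|exact B1]. apply LBpos; [apply (SSpos N s x p k j H); lia|lra]. }
  replace ((x (S k) - x k) / (x j - x k)) with ((x k - x (S k)) / (x k - x j)) by (field; lra).
  replace (PI ^ 2 * (INR s + 1) / 2) with (PI^2/4 * (2 * (INR s + 1))) by field.
  assert (Hm : 0 < INR (j - k)) by (apply lt_0_INR; lia).
  apply (ratio_main (SS N (p k + p (S k))) (INR (p (S k) - p k)) _ (SS N (p k + p j)) (INR (p j - p k)) _ (uu N));
    try lra.
  - apply (SSpos N s x p k j H); lia.
  - assert (Hi := I2 N s (p k) (p (S k)) (p j) k j ltac:(lia) ltac:(lia) ltac:(lia) ltac:(lia) ltac:(lia)).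
    apply le_INR in Hi. unfold SS. rinr Hi. lra.
  - assert (0 < 8 / PI^2 * SS N (p k + p (S k)) * INR (p (S k) - p k) * uu N^2).
    { apply LBpos; [apply (SSpos N s x p k (S k) H); lia|lra]. }
    lra.
Qed.

Lemma cond3 N s x p : hyp N s x p ->
  forall k, (1 <= k)%nat -> (k <= N - s - 1)%nat ->
  1 / ((INR s + 1) * (INR s + 3) * PI ^ 2 / 4) <= (x (S k) - x k) / (x k - x (k - 1)%nat) /\
  (x (S k) - x k) / (x k - x (k - 1)%nat) <= (INR s + 1) * (INR s + 3) * PI ^ 2 / 4.
Proof.
  intros H k hk1 hk. assert (HN : (s + 2 < N)%nat) by (destruct H; lia).
  assert (Hu := uu_pos N ltac:(lia)).
  destruct (Dx N s x p k (S k) H ltac:(lia) ltac:(lia)) as [A1 A2].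
  destruct (Dx N s x p (k-1) k H ltac:(lia) ltac:(lia)) as [B1 B2].
  destruct (hyp_p N s x p (k-1) k H ltac:(lia) ltac:(lia)) as [C1 [C2 [C3 C4]]].
  destruct (hyp_p N s x p k (S k) H ltac:(lia) ltac:(lia)) as [D1 [D2 [D3 D4]]].
  assert (HP := PI_gt_3).
  assert (Ba : 0 < 8 / PI^2 * SS N (p k + p (S k)) * INR (p (S k) - p k) * uu N^2).
  { apply LBpos; [apply (SSpos N s x p k (S k) H); lia|lra]. }
  assert (Bb : 0 < 8 / PI^2 * SS N (p (k-1)%nat + p k) * INR (p k - p (k-1)%nat) * uu N^2).
  { apply LBpos; [apply (SSpos N s x p (k-1) k H); lia|lra]. }
  replace ((x (S k) - x k) / (x k - x (k - 1)%nat)) with ((x k - x (S k)) / (x (k - 1)%nat - x k)) by (field; lra).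
  replace ((INR s + 1) * (INR s + 3) * PI ^ 2 / 4) with (PI^2/4 * ((INR s + 1) * (INR s + 3)) / 1) by field.
  destruct (I3 N s (p (k-1)%nat) (p k) (p (S k)) ltac:(lia) ltac:(lia) ltac:(lia) ltac:(lia) ltac:(lia)) as [I3a I3b].
  split.
  - assert (Hr : (x (k-1)%nat - x k) / (x k - x (S k)) <= PI^2/4 * ((INR s + 1) * (INR s + 3)) / 1).
    { apply (ratio_main (SS N (p (k-1)%nat + p k)) (INR (p k - p (k-1)%nat)) _ (SS N (p k + p (S k))) (INR (p (S k) - p k)) _ (uu N));
        try lra.
      - apply (SSpos N s x p k (S k) H); lia.
      - apply le_INR in I3b. unfold SS. rinr I3b. lra. }
    assert (0 < (x (k-1)%nat - x k) / (x k - x (S k))) by (apply Rdiv_lt_0_compat; lra).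
    replace ((x k - x (S k)) / (x (k - 1)%nat - x k)) with (1 / ((x (k-1)%nat - x k) / (x k - x (S k)))) by (field; lra).
    assert (0 < PI ^ 2 / 4 * ((INR s + 1) * (INR s + 3)) / 1).
    { assert (0 <= INR s) by apply pos_INR. assert (0 < PI^2) by nra.
      apply Rdiv_lt_0_compat; [|lra]. apply Rmult_lt_0_compat; [lra|nra]. }
    apply div_le; lra.
  - apply (ratio_main (SS N (p k + p (S k))) (INR (p (S k) - p k)) _ (SS N (p (k-1)%nat + p k)) (INR (p k - p (k-1)%nat)) _ (uu N));
      try lra.
    + apply (SSpos N s x p (k-1) k H); lia.
    + apply le_INR in I3a. unfold SS. rinr I3a. lra.
Qed.

Lemma telescope (f F : nat -> R) n :
  (forall i, (i <= n)%nat -> f i <= F (S i) - F i) -> sum_f_R0 f n <= F (S n) - F 0%nat.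
Proof.
  induction n as [|n IH]; intros H.
  - simpl. apply H; lia.
  - simpl. specialize (IH ltac:(intros; apply H; lia)). specialize (H (S n) ltac:(lia)). lra.
Qed.

Lemma pow_m1_sq m : (-1) ^ m * (-1) ^ m = 1.
Proof. rewrite <- pow_add. replace (m + m)%nat with (2 * m)%nat by lia. rewrite pow_1_even. reflexivity. Qed.

Lemma alt_inc (a : nat -> R) m :
  (forall i, (i < m)%nat -> a i <= a (S i)) -> (forall i, (i <= m)%nat -> 0 <= a i) ->
  let T := (-1) ^ m * sum_f_R0 (fun i => (-1) ^ i * a i) m in
  0 <= T <= a m /\ ((1 <= m)%nat -> a m - a (m - 1)%nat <= T).
Proof.
  induction m as [|m IH]; intros Hinc Hpos T.
  - unfold T; simpl. specialize (Hpos 0%nat ltac:(lia)). split; [lra|]. intros; lia.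
  - specialize (IH ltac:(intros; apply Hinc; lia) ltac:(intros; apply Hpos; lia)).
    simpl in IH. destruct IH as [[I1 I2] _].
    assert (E : T = a (S m) - (-1) ^ m * sum_f_R0 (fun i => (-1) ^ i * a i) m).
    { unfold T. simpl sum_f_R0. simpl pow.
      assert (H1 := pow_m1_sq m). set (q := (-1)^m) in *.
      set (S0 := sum_f_R0 (fun i : nat => (-1) ^ i * a i) m).
      transitivity (- q * S0 + (q * q) * a (S m)); [ring|]. rewrite H1; ring. }
    specialize (Hinc m ltac:(lia)). specialize (Hpos (S m) ltac:(lia)).
    replace (S m - 1)%nat with m by lia. split; [|intros; lra]. lra.
Qed.

Lemma alt_dec M : forall (b : nat -> R),
  (forall i, (i < M)%nat -> b (S i) <= b i) -> (forall i, (i <= M)%nat -> 0 <= b i) ->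
  let T := sum_f_R0 (fun i => (-1) ^ i * b i) M in
  0 <= T <= b 0%nat /\ ((1 <= M)%nat -> b 0%nat - b 1%nat <= T).
Proof.
  induction M as [|M IH]; intros b Hdec Hpos T.
  - unfold T; simpl. specialize (Hpos 0%nat ltac:(lia)). split; [lra|]. intros; lia.
  - specialize (IH (fun i => b (S i)) ltac:(intros; apply Hdec; lia) ltac:(intros; apply Hpos; lia)).
    simpl in IH. destruct IH as [[I1 I2] _].
    assert (Hs : sum_f_R0 (fun i => (-1) ^ (S i) * b (S i)) M = - sum_f_R0 (fun i => (-1) ^ i * b (S i)) M).
    { rewrite <- (Rmult_1_l (sum_f_R0 (fun i : nat => (-1) ^ i * b (S i)) M)).
      rewrite Ropp_mult_distr_l, scal_sum. apply sum_eq. intros. simpl. ring. }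
    assert (E : T = b 0%nat - sum_f_R0 (fun i => (-1) ^ i * b (S i)) M).
    { unfold T. rewrite decomp_sum by lia. simpl pred. rewrite Hs. simpl. ring. }
    specialize (Hdec 0%nat ltac:(lia)). specialize (Hpos 0%nat ltac:(lia)).
    split; [|intros; lra]. lra.
Qed.

Lemma ln_le a b : 0 < a -> a <= b -> ln a <= ln b.
Proof. intros. destruct H0. left; apply ln_increasing; lra. subst; lra. Qed.

Lemma harm_ln m : 2 <= m -> 1 / m <= ln m - ln (m - 1).
Proof.
  intros Hm. assert (E : m - 1 = m * (1 - 1/m)) by (field; lra).
  assert (1/m <= 1/2) by (apply Rmult_le_compat_l; [lra| apply Rinv_le_contravar; lra]).
  rewrite E, ln_mult by lra.
  assert (ln (1 - 1/m) <= - (1/m)).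
  { rewrite <- (ln_exp (- (1/m))). apply ln_le.
    assert (1/m <= 1/2) by (apply Rmult_le_compat_l; [lra| apply Rinv_le_contravar; lra]). lra.
    assert (Hx := exp_ineq1_le (- (1/m))). lra. }
  lra.
Qed.

Lemma ln3 : 1 <= ln 3.
Proof. rewrite <- ln_exp at 1. apply ln_le. apply exp_pos. apply exp_le_3. Qed.

Lemma is_node_true x n t m : (m <= n)%nat -> t = x m -> is_nodeb x n t = true.
Proof.
  induction n as [|n IH]; intros Hm Ht; simpl.
  - assert (m = 0%nat) by lia. subst. destruct (Req_EM_T (x 0%nat) (x 0%nat)); [reflexivity| congruence].
  - destruct (Req_EM_T t (x (S n))); [reflexivity|].
    destruct (Nat.eq_dec m (S n)). subst; congruence. apply IH; auto; lia.
Qed.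

Lemma is_node_false x n t : (forall i, (i <= n)%nat -> t <> x i) -> is_nodeb x n t = false.
Proof.
  induction n as [|n IH]; intros H; simpl.
  - destruct (Req_EM_T t (x 0%nat)); [exfalso; apply (H 0%nat); auto|reflexivity].
  - destruct (Req_EM_T t (x (S n))); [exfalso; apply (H (S n)); auto|]. apply IH; intros; apply H; lia.
Qed.

Lemma sum_delta m n : (m <= n)%nat -> sum_f_R0 (fun i => if Nat.eq_dec i m then 1 else 0) n = 1.
Proof.
  assert (Z : forall k, (k < m)%nat -> sum_f_R0 (fun i => if Nat.eq_dec i m then 1 else 0) k = 0).
  { induction k; intros.
    - change ((if Nat.eq_dec 0 m then 1 else 0) = 0). destruct (Nat.eq_dec 0 m); [lia|reflexivity].
    - rewrite tech5, IHk by lia. destruct (Nat.eq_dec (S k) m); [lia|ring]. }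
  induction n as [|n IH]; intros Hm.
  - assert (m = 0%nat) by lia. subst. reflexivity.
  - rewrite tech5. destruct (Nat.eq_dec (S n) m).
    + subst. rewrite Z by lia. ring.
    + rewrite IH by lia. ring.
Qed.

Lemma leb_node x n m : (forall i j, (i < j <= n)%nat -> x j < x i) -> (m <= n)%nat ->
  lebesgue_function x n (x m) = 1.
Proof.
  intros Hord Hm. unfold lebesgue_function.
  rewrite <- (sum_delta m n Hm). apply sum_eq. intros i Hi. unfold berrut_basis.
  destruct (Req_EM_T (x m) (x i)) as [E|E].
  - destruct (Nat.eq_dec i m); [rewrite Rabs_R1; reflexivity|].
    exfalso. destruct (Nat.lt_total i m) as [h|[h|h]]; [|lia|].
    + specialize (Hord i m ltac:(lia)). lra.
    + specialize (Hord m i ltac:(lia)). lra.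
  - rewrite (is_node_true x n (x m) m Hm eq_refl).
    destruct (Nat.eq_dec i m); [subst; congruence|]. rewrite Rabs_R0; reflexivity.
Qed.

Lemma leb_nonnode x n t : (forall i, (i <= n)%nat -> t <> x i) ->
  lebesgue_function x n t =
  sum_f_R0 (fun i => 1 / Rabs (t - x i)) n / Rabs (sum_f_R0 (fun j => (-1) ^ j / (t - x j)) n).
Proof.
  intros H. unfold lebesgue_function.
  set (D := sum_f_R0 (fun j => (-1) ^ j / (t - x j)) n).
  transitivity (sum_f_R0 (fun i => 1 / Rabs (t - x i) * / Rabs D) n).
  - apply sum_eq. intros i Hi. unfold berrut_basis.
    destruct (Req_EM_T t (x i)) as [E|E]; [exfalso; apply (H i Hi E)|].
    rewrite (is_node_false x n t H). fold D.
    unfold Rdiv. rewrite !Rabs_mult, !Rabs_inv, pow_1_abs. ring.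
  - rewrite <- scal_sum. unfold Rdiv. ring.
Qed.

Lemma lub_le (E : R -> Prop) b : (forall y, E y -> y <= b) -> Rbar_le (Lub_Rbar E) (Finite b).
Proof.
  intros H. destruct (Lub_Rbar_correct E) as [_ H2]. apply H2. intros y Hy. simpl. apply H; auto.
Qed.

Lemma x_strict N s x p i j : hyp N s x p -> (i < j)%nat -> (j <= N - s)%nat -> x j < x i.
Proof.
  intros H hij hj. assert (HN : (s + 2 < N)%nat) by (destruct H; lia).
  destruct (Dx N s x p i j H ltac:(lia) hj) as [A _].
  assert (0 < 8 / PI^2 * SS N (p i + p j) * INR (p j - p i) * uu N^2).
  { apply LBpos; [apply (SSpos N s x p i j H); lia| apply uu_pos; lia]. }
  lra.
Qed.

Lemma x_mono N s x p i j : hyp N s x p -> (i <= j)%nat -> (j <= N - s)%nat -> x j <= x i.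
Proof. intros. destruct (Nat.eq_dec i j). subst; lra. left; apply (x_strict N s x p); auto; lia. Qed.

Lemma num_bound (x : nat -> R) t n d (g : nat -> R) : 0 < d ->
  (forall i, (i <= n)%nat -> 0 < Rabs (t - x i)) ->
  (forall i, (i <= n)%nat -> d / Rabs (t - x i) <= g i) ->
  sum_f_R0 (fun i => 1 / Rabs (t - x i)) n <= sum_f_R0 g n / d.
Proof.
  intros Hd Hp Hg. unfold Rdiv at 2. rewrite Rmult_comm, scal_sum.
  apply sum_Rle. intros i Hi. specialize (Hg i Hi). specialize (Hp i Hi).
  replace (1 / Rabs (t - x i)) with (d / Rabs (t - x i) * / d) by (field; lra).
  apply Rmult_le_compat_r; [left; apply Rinv_0_lt_compat; lra| exact Hg].
Qed.

Lemma final_ratio Num Dabs d c S : 0 < d -> 0 < c -> c / d <= Dabs -> Num <= S / d -> 0 <= Num ->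
  Num / Dabs <= S / c.
Proof.
  intros Hd Hc HD HN HN0. assert (0 < c / d) by (apply Rdiv_lt_0_compat; lra).
  apply Rle_trans with ((S / d) / (c / d)).
  - unfold Rdiv at 1. apply Rle_trans with (Num * / (c / d)).
    + apply Rmult_le_compat_l; [lra|]. apply Rinv_le_contravar; lra.
    + apply Rmult_le_compat_r; [left; apply Rinv_0_lt_compat; lra| lra].
  - right. field. lra.
Qed.

Lemma shapeA d h e : 0 < d -> d <= h -> 0 <= e -> d / (e + d) <= h / (e + h).
Proof. intros. apply div_le; nra. Qed.

Lemma shapeB d h E : 0 < d -> d <= h / 2 -> h <= E -> d / (E - d) <= h / E.
Proof. intros. apply div_le; nra. Qed.

Lemma sum_nonneg (f : nat -> R) n : (forall i, (i <= n)%nat -> 0 <= f i) -> 0 <= sum_f_R0 f n.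
Proof. induction n; intros H; simpl. apply H; lia. specialize (IHn ltac:(intros; apply H; lia)).
  specialize (H (S n) ltac:(lia)). lra. Qed.

Lemma Rdiv_le_0_compat a b : 0 <= a -> 0 < b -> 0 <= a / b.
Proof. intros. unfold Rdiv. apply Rmult_le_pos; [lra| left; apply Rinv_0_lt_compat; lra]. Qed.

Lemma INR_ge1 m : (1 <= m)%nat -> 1 <= INR m.
Proof. intros. apply (le_INR 1 m) in H. simpl in H. exact H. Qed.

Lemma h_lb N s x p i : hyp N s x p -> (i < N - s)%nat -> 8 / PI^2 * uu N ^ 2 <= x i - x (S i).
Proof.
  intros H hi. assert (HN : (s + 2 < N)%nat) by (destruct H; lia).
  destruct (Dx N s x p i (S i) H ltac:(lia) ltac:(lia)) as [A _].
  destruct (hyp_p N s x p i (S i) H ltac:(lia) ltac:(lia)) as [B1 [B2 _]].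
  assert (1 <= SS N (p i + p (S i)) * INR (p (S i) - p i)).
  { unfold SS. rewrite <- mult_INR. apply INR_ge1.
    assert (1 <= Nat.min (p i + p (S i)) (2 * N - (p i + p (S i))))%nat by lia.
    assert (1 <= p (S i) - p i)%nat by lia. nia. }
  assert (HP := PI_gt_3). assert (0 < 8/PI^2) by (apply Rdiv_lt_0_compat; [lra| apply pow_lt; lra]).
  assert (0 < uu N ^ 2) by (apply pow_lt; apply uu_pos; lia).
  assert (8 / PI^2 * uu N ^ 2 * 1 <= 8 / PI^2 * uu N^2 * (SS N (p i + p (S i)) * INR (p (S i) - p i))).
  { apply Rmult_le_compat_l; [nra|lra]. }
  lra.
Qed.

Lemma cos0_idx N : (0 < N)%nat -> cos (INR 0 * PI / INR N) = 1.
Proof. intros. simpl. unfold Rdiv. rewrite !Rmult_0_l. apply cos_0. Qed.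

Lemma cosN_idx N : (0 < N)%nat -> cos (INR N * PI / INR N) = -1.
Proof. intros. replace (INR N * PI / INR N) with PI. apply cos_PI.
  assert (0 < INR N) by (apply lt_0_INR; lia). field. lra. Qed.

Lemma caseE1 N s x p t : hyp N s x p -> t <= 1 -> x 0%nat < t ->
  sum_f_R0 (fun i => 1 / Rabs (t - x i)) (N - s) /
    Rabs (sum_f_R0 (fun j => (-1) ^ j / (t - x j)) (N - s))
   <= (1 + PI^2/4 * INR s ^ 2) * (1 + PI^2/4 * INR s).
Proof.
  intros H Ht1 Ht0. set (n := (N - s)%nat).
  assert (HN : (s + 2 < N)%nat) by (destruct H; lia).
  assert (Hu := uu_pos N ltac:(lia)). set (u := uu N) in *.
  assert (HP := PI_gt_3).
  assert (Hmono : forall i, (i <= n)%nat -> x i <= x 0%nat) by (intros i hi; apply (x_mono N s x p 0%nat i H); unfold n in *; lia).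
  assert (Hd : forall i, (i <= n)%nat -> 0 < t - x i) by (intros i hi; specialize (Hmono i hi); lra).
  assert (Habs : forall i, (i <= n)%nat -> Rabs (t - x i) = t - x i) by (intros i hi; apply Rabs_right; specialize (Hd i hi); lra).
  assert (H' := H). destruct H' as [H0 [Hp [Hm Hb]]].
  destruct (Hp 0%nat ltac:(lia)) as [Hp0N Hx0].
  assert (Hp0 : (1 <= p 0%nat <= s)%nat).
  { split; [|specialize (Hb 0%nat ltac:(lia)); lia].
    destruct (p 0%nat) eqn:E; [|lia]. exfalso. rewrite Hx0, cos0_idx in Ht0 by lia. lra. }
  set (P := INR (p 0%nat)).
  assert (HP1 : 1 <= P) by (apply INR_ge1; lia).
  assert (HPs : P <= INR s) by (apply le_INR; lia).
  assert (E0 : 1 - x 0%nat <= 2 * P ^ 2 * u ^ 2).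
  { destruct (Delta_bounds N 0 (p 0%nat) ltac:(lia) ltac:(lia) ltac:(lia)) as [_ A].
    rewrite cos0_idx in A by lia. rewrite <- Hx0 in A. rewrite Nat.sub_0_r, Nat.add_0_l in A.
    assert (SS N (p 0%nat) <= P) by (unfold SS, P; apply le_INR; lia).
    fold u P in A. assert (0 <= u^2) by (apply pow_le; lra). 
    assert (2 * SS N (p 0%nat) * P * u ^ 2 <= 2 * P ^ 2 * u^2).
    { replace (2 * P ^ 2 * u^2) with (2 * P * P * u^2) by ring. 
      apply Rmult_le_compat_r; [lra|]. apply Rmult_le_compat_r; lra. }
    lra. }
  assert (Ei : forall i, (1 <= i <= n)%nat -> 8 / PI^2 * (P + INR i) ^ 2 * u ^ 2 <= 1 - x i).
  { intros i hi. destruct (Hp i ltac:(unfold n in *; lia)) as [HpiN Hxi].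
    destruct (Delta_bounds N 0 (p i) ltac:(lia) ltac:(lia) ltac:(lia)) as [A _].
    rewrite cos0_idx in A by lia. rewrite <- Hxi in A. rewrite Nat.sub_0_r, Nat.add_0_l in A.
    assert (SS N (p i) = INR (p i)) by (unfold SS; f_equal; lia). rewrite H1 in A. fold u in A.
    assert (Hle : P + INR i <= INR (p i)).
    { specialize (Hm 0%nat i ltac:(unfold n in *; lia)). simpl in Hm. unfold P. rewrite <- plus_INR. apply le_INR; lia. }
    assert (0 <= INR i) by apply pos_INR.
    assert ((P + INR i)^2 <= INR (p i) * INR (p i)) by nra.
    assert (0 < 8 / PI^2) by (apply Rdiv_lt_0_compat; [lra| apply pow_lt; lra]).
    assert (0 <= u^2) by (apply pow_le; lra).
    assert (8 / PI^2 * (P + INR i) ^ 2 * u ^ 2 <= 8 / PI^2 * (INR (p i) * INR (p i)) * u^2).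
    { apply Rmult_le_compat_r; [lra|]. apply Rmult_le_compat_l; lra. }
    lra. }
  assert (Hh0 := h_lb N s x p 0%nat H ltac:(unfold n in *; lia)). fold u in Hh0.
  assert (Hn1 : (1 <= n)%nat) by (unfold n; lia).
  set (h0 := x 0%nat - x 1%nat) in *.
  assert (0 < 8 / PI^2 * u^2) by (apply Rmult_lt_0_compat; [apply Rdiv_lt_0_compat; [lra| apply pow_lt; lra]| apply pow_lt; lra]).
  set (b := fun j => 1 / (t - x j)).
  assert (Dsum : sum_f_R0 (fun j => (-1) ^ j / (t - x j)) n = sum_f_R0 (fun j => (-1) ^ j * b j) n).
  { apply sum_eq; intros; unfold b; field. specialize (Hd i H2); lra. }
  destruct (alt_dec n b) as [[T1 T2] T3].
  { intros i hi. unfold b. assert (Hx := x_mono N s x p i (S i) H ltac:(lia) ltac:(unfold n in *; lia)).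
    specialize (Hd i ltac:(lia)). unfold Rdiv; rewrite !Rmult_1_l. apply Rinv_le_contravar; lra. }
  { intros i hi. unfold b. specialize (Hd i hi). left; apply Rdiv_lt_0_compat; lra. }
  specialize (T3 Hn1).
  set (d0 := t - x 0%nat). set (d1 := t - x 1%nat).
  assert (Hd0 : 0 < d0) by (apply Hd; lia). assert (Hd1 : d1 = d0 + h0) by (unfold d1, d0, h0; ring).
  assert (Hg : 0 < h0) by lra.
  set (g := fun i => if Nat.eq_dec i 0 then 1 else PI^2/4 * P^2 / (P + INR i)^2).
  assert (g0 : g 0%nat = 1) by (unfold g; destruct (Nat.eq_dec 0 0); [reflexivity|lia]).
  assert (gi : forall i, i <> 0%nat -> g i = PI^2/4 * P^2 / (P + INR i)^2) by (intros i hi; unfold g; destruct (Nat.eq_dec i 0); [lia|reflexivity]).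
  rewrite Dsum.
  apply Rle_trans with (sum_f_R0 g n / (h0 / d1)).
  - apply (final_ratio _ _ d0).
    + exact Hd0.
    + apply Rdiv_lt_0_compat; lra.
    + apply Rle_trans with (sum_f_R0 (fun i => (-1) ^ i * b i) n); [|apply Rle_abs].
      eapply Rle_trans; [|exact T3]. unfold b. right. fold d0 d1. rewrite Hd1. field. lra.
    + apply num_bound; [exact Hd0| intros i hi; rewrite Habs by auto; apply Hd; auto|].
      intros i hi. rewrite Habs by auto. destruct (Nat.eq_dec i 0) as [->|ne].
      * rewrite g0. fold d0. right; field; lra.
      * rewrite (gi i ne). specialize (Ei i ltac:(lia)). specialize (Hmono i hi).
        apply Rle_trans with ((1 - x 0%nat) / (1 - x i)).
        { replace (t - x i) with ((x 0%nat - x i) + d0) by (unfold d0; ring).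
          replace (1 - x i) with ((x 0%nat - x i) + (1 - x 0%nat)) by ring.
          apply shapeA; unfold d0; lra. }
        assert (0 < 8 / PI ^ 2 * (P + INR i) ^ 2 * u ^ 2).
        { assert (0 < (P + INR i)^2) by (apply pow_lt; assert (0 <= INR i) by apply pos_INR; lra).
          assert (0 < 8 / PI ^ 2) by (apply Rdiv_lt_0_compat; [lra| apply pow_lt; lra]).
          apply Rmult_lt_0_compat; [apply Rmult_lt_0_compat|apply pow_lt]; lra. }
        apply div_le; [lra| apply pow_lt; assert (0 <= INR i) by apply pos_INR; lra|].
        assert (0 <= 1 - x 0%nat) by (unfold d0 in Hd0; lra).
        assert (0 <= (P + INR i)^2) by (apply pow_le; assert (0 <= INR i) by apply pos_INR; lra).
        apply Rle_trans with (2 * P ^ 2 * u ^ 2 * (P + INR i) ^ 2); [apply Rmult_le_compat_r; lra|].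
        apply Rle_trans with (PI ^ 2 / 4 * P ^ 2 * (8 / PI ^ 2 * (P + INR i) ^ 2 * u ^ 2)).
        { right. field. lra. }
        apply Rmult_le_compat_l; [|lra]. apply Rmult_le_pos; [|apply pow_le; lra].
        apply Rdiv_le_0_compat; [apply pow_le; lra| lra].
    + apply sum_nonneg. intros i hi. rewrite Habs by auto. specialize (Hd i hi). left; apply Rdiv_lt_0_compat; lra.
  -
    assert (Sg : sum_f_R0 g n <= 1 + PI^2/4 * P).
    { set (F := fun i : nat => if Nat.eq_dec i 0 then 0 else 1 + PI^2/4 * (P - P^2 / (P + INR i - 1))).
      apply Rle_trans with (F (S n) - F 0%nat).
      - assert (F0 : F 0%nat = 0) by (unfold F; destruct (Nat.eq_dec 0 0); [reflexivity|lia]).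
        assert (Fi : forall i, i <> 0%nat -> F i = 1 + PI^2/4 * (P - P^2 / (P + INR i - 1))) by (intros i hi; unfold F; destruct (Nat.eq_dec i 0); [lia|reflexivity]).
        apply telescope. intros i hi. rewrite (Fi (S i)) by lia.
        rewrite S_INR. destruct (Nat.eq_dec i 0) as [->|ne].
        + rewrite g0, F0. replace (P + (INR 0 + 1) - 1) with P by (simpl; ring). replace (P^2/P) with P by (field; lra). lra.
        + rewrite (gi i ne), (Fi i ne). assert (1 <= INR i) by (apply INR_ge1; lia).
          apply Rle_trans with (PI^2/4 * P^2 / ((P + INR i - 1) * (P + INR i))).
          * apply div_le. apply pow_lt; lra. nra.
            assert (0 <= PI^2/4 * P^2) by (apply Rmult_le_pos; [apply Rdiv_le_0_compat;[apply pow_le; lra|lra]|apply pow_le; lra]).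
            assert ((P + INR i - 1) * (P + INR i) <= (P + INR i)^2) by nra. nra.
          * right. field. split; lra.
      - unfold F. destruct (Nat.eq_dec (S n) 0); [lia|]. destruct (Nat.eq_dec 0 0); [|lia].
        assert (0 <= P^2 / (P + INR (S n) - 1)).
        { apply Rdiv_le_0_compat; [apply pow_le; lra|]. assert (0 <= INR n) by apply pos_INR. rewrite S_INR. lra. }
        assert (0 <= PI^2/4) by (apply Rdiv_le_0_compat; [apply pow_le; lra|lra]). nra. }
    assert (Hdh : d1 / h0 <= 1 + PI^2/4 * P^2).
    { rewrite Hd1. assert (d0 <= 1 - x 0%nat) by (unfold d0; lra).
      replace ((d0 + h0) / h0) with (1 + d0 / h0) by (field; lra).
      assert (d0 / h0 <= PI ^ 2 / 4 * P ^ 2 / 1).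
      { apply div_le; [lra|lra|].
        apply Rle_trans with (2 * P ^ 2 * u ^ 2); [lra|].
        apply Rle_trans with (PI ^ 2 / 4 * P ^ 2 * (8 / PI ^ 2 * u ^ 2)); [right; field; lra|].
        apply Rmult_le_compat_l; [|lra]. apply Rmult_le_pos; [apply Rdiv_le_0_compat;[apply pow_le; lra|lra]|apply pow_le; lra]. }
      lra. }
    assert (0 <= sum_f_R0 g n).
    { apply sum_nonneg. intros i hi. destruct (Nat.eq_dec i 0) as [->|ne]; [rewrite g0; lra|]. rewrite (gi i ne).
      apply Rdiv_le_0_compat; [apply Rmult_le_pos; [apply Rdiv_le_0_compat;[apply pow_le; lra|lra]|apply pow_le; lra]|].
      apply pow_lt. assert (0 <= INR i) by apply pos_INR. lra. }
    replace (sum_f_R0 g n / (h0 / d1)) with (sum_f_R0 g n * (d1 / h0)) by (field; lra).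
    assert (0 <= PI^2/4) by (apply Rdiv_le_0_compat; [apply pow_le; lra|lra]).
    assert (P^2 <= INR s ^ 2) by nra.
    assert (d1 / h0 <= 1 + PI^2/4 * INR s ^ 2) by nra.
    assert (sum_f_R0 g n <= 1 + PI^2/4 * INR s) by nra.
    assert (0 <= d1 / h0) by (apply Rdiv_le_0_compat; lra).
    rewrite Rmult_comm. apply Rmult_le_compat; lra.
Qed.

Lemma caseE2 N s x p t : hyp N s x p -> -1 <= t -> t < x (N - s)%nat ->
  sum_f_R0 (fun i => 1 / Rabs (t - x i)) (N - s) /
    Rabs (sum_f_R0 (fun j => (-1) ^ j / (t - x j)) (N - s))
   <= (1 + PI^2/4 * INR s ^ 2) * (1 + PI^2/4 * INR s).
Proof.
  intros H Ht1 Ht0. set (n := (N - s)%nat) in *.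
  assert (HN : (s + 2 < N)%nat) by (destruct H; lia).
  assert (Hu := uu_pos N ltac:(lia)). set (u := uu N) in *.
  assert (HP := PI_gt_3).
  assert (Hmono : forall i, (i <= n)%nat -> x n <= x i) by (intros i hi; apply (x_mono N s x p i n H); unfold n in *; lia).
  assert (Hd : forall i, (i <= n)%nat -> 0 < x i - t) by (intros i hi; specialize (Hmono i hi); lra).
  assert (Habs : forall i, (i <= n)%nat -> Rabs (t - x i) = x i - t).
  { intros i hi. rewrite Rabs_left; [ring|]. specialize (Hd i hi); lra. }
  assert (H' := H). destruct H' as [H0 [Hp [Hm Hb]]].
  destruct (Hp n ltac:(lia)) as [HpnN Hxn].
  assert (Hq : (1 <= N - p n <= s)%nat).
  { split; [|specialize (Hb n ltac:(lia)); unfold n in *; lia].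
    destruct (Nat.eq_dec (p n) N) as [E|E]; [|lia]. exfalso. rewrite Hxn, E, cosN_idx in Ht0 by lia. lra. }
  set (Q := INR (N - p n)).
  assert (HQ1 : 1 <= Q) by (apply INR_ge1; lia).
  assert (HQs : Q <= INR s) by (apply le_INR; lia).
  assert (E0 : 1 + x n <= 2 * Q ^ 2 * u ^ 2).
  { destruct (Delta_bounds N (p n) N ltac:(lia) ltac:(lia) ltac:(lia)) as [_ A].
    rewrite cosN_idx in A by lia. rewrite <- Hxn in A.
    assert (SS N (p n + N) = Q) by (unfold SS, Q; f_equal; lia). rewrite H1 in A. fold Q u in A.
    replace (2 * Q ^ 2 * u^2) with (2 * Q * Q * u^2) by ring. lra. }
  assert (Ei : forall i, (i < n)%nat -> 8 / PI^2 * (Q + INR (n - i)) ^ 2 * u ^ 2 <= 1 + x i).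
  { intros i hi. destruct (Hp i ltac:(lia)) as [HpiN Hxi].
    destruct (Delta_bounds N (p i) N ltac:(lia) ltac:(lia) ltac:(lia)) as [A _].
    rewrite cosN_idx in A by lia. rewrite <- Hxi in A.
    assert (SS N (p i + N) = INR (N - p i)) by (unfold SS; f_equal; lia). rewrite H1 in A. fold u in A.
    assert (Hle : Q + INR (n - i) <= INR (N - p i)).
    { specialize (Hm i (n - i)%nat ltac:(lia)). replace (i + (n - i))%nat with n in Hm by lia.
      unfold Q. rewrite <- plus_INR. apply le_INR; lia. }
    assert (0 <= INR (n - i)) by apply pos_INR.
    assert ((Q + INR (n - i))^2 <= INR (N - p i) * INR (N - p i)) by nra.
    assert (0 < 8 / PI^2) by (apply Rdiv_lt_0_compat; [lra| apply pow_lt; lra]).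
    assert (0 <= u^2) by (apply pow_le; lra).
    assert (8 / PI^2 * (Q + INR (n - i)) ^ 2 * u ^ 2 <= 8 / PI^2 * (INR (N - p i) * INR (N - p i)) * u^2).
    { apply Rmult_le_compat_r; [lra|]. apply Rmult_le_compat_l; lra. }
    lra. }
  assert (Hn1 : (1 <= n)%nat) by (unfold n; lia).
  assert (Hh0 := h_lb N s x p (n - 1)%nat H ltac:(unfold n in *; lia)). fold u in Hh0.
  replace (S (n - 1)) with n in Hh0 by lia.
  set (h0 := x (n - 1)%nat - x n) in *.
  assert (0 < 8 / PI^2 * u^2) by (apply Rmult_lt_0_compat; [apply Rdiv_lt_0_compat; [lra| apply pow_lt; lra]| apply pow_lt; lra]).
  set (a := fun j => 1 / (x j - t)).
  assert (Dsum : sum_f_R0 (fun j => (-1) ^ j / (t - x j)) n = - sum_f_R0 (fun j => (-1) ^ j * a j) n).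
  { rewrite <- (Rmult_1_l (sum_f_R0 (fun j => (-1) ^ j * a j) n)).
    rewrite Ropp_mult_distr_l, scal_sum. apply sum_eq; intros; unfold a; field.
    specialize (Hd i H2); lra. }
  destruct (alt_inc a n) as [[T1 T2] T3].
  { intros i hi. unfold a. assert (Hx := x_mono N s x p i (S i) H ltac:(lia) ltac:(unfold n in *; lia)).
    specialize (Hd (S i) ltac:(lia)). unfold Rdiv; rewrite !Rmult_1_l. apply Rinv_le_contravar; lra. }
  { intros i hi. unfold a. specialize (Hd i hi). left; apply Rdiv_lt_0_compat; lra. }
  specialize (T3 Hn1).
  set (dn := x n - t). set (d1 := x (n - 1)%nat - t).
  assert (Hd0 : 0 < dn) by (apply Hd; lia). assert (Hd1 : d1 = dn + h0) by (unfold d1, dn, h0; ring).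
  assert (Hg : 0 < h0) by lra.
  set (g := fun i => if Nat.eq_dec i n then 1 else PI^2/4 * Q^2 / (Q + INR (n - i))^2).
  assert (g0 : g n = 1) by (unfold g; destruct (Nat.eq_dec n n); [reflexivity|lia]).
  assert (gi : forall i, i <> n -> g i = PI^2/4 * Q^2 / (Q + INR (n - i))^2) by (intros i hi; unfold g; destruct (Nat.eq_dec i n); [lia|reflexivity]).
  rewrite Dsum, Rabs_Ropp.
  apply Rle_trans with (sum_f_R0 g n / (h0 / d1)).
  - apply (final_ratio _ _ dn).
    + exact Hd0.
    + apply Rdiv_lt_0_compat; lra.
    + apply Rle_trans with ((-1) ^ n * sum_f_R0 (fun i => (-1) ^ i * a i) n).
      * eapply Rle_trans; [|exact T3]. unfold a. right. fold dn d1. rewrite Hd1. field. lra.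
      * rewrite <- (Rmult_1_l (Rabs _)). rewrite <- (pow_1_abs n), <- Rabs_mult. apply Rle_abs.
    + apply num_bound; [exact Hd0| intros i hi; rewrite Habs by auto; apply Hd; auto|].
      intros i hi. rewrite Habs by auto. destruct (Nat.eq_dec i n) as [->|ne].
      * rewrite g0. fold dn. right; field; lra.
      * rewrite (gi i ne). specialize (Ei i ltac:(lia)). specialize (Hmono i hi).
        apply Rle_trans with ((1 + x n) / (1 + x i)).
        { replace (x i - t) with ((x i - x n) + dn) by (unfold dn; ring).
          replace (1 + x i) with ((x i - x n) + (1 + x n)) by ring.
          apply shapeA; unfold dn; lra. }
        assert (0 <= INR (n - i)) by apply pos_INR.
        assert (0 < 8 / PI ^ 2 * (Q + INR (n - i)) ^ 2 * u ^ 2).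
        { assert (0 < (Q + INR (n - i))^2) by (apply pow_lt; lra).
          assert (0 < 8 / PI ^ 2) by (apply Rdiv_lt_0_compat; [lra| apply pow_lt; lra]).
          apply Rmult_lt_0_compat; [apply Rmult_lt_0_compat|apply pow_lt]; lra. }
        apply div_le; [lra| apply pow_lt; lra|].
        assert (0 <= 1 + x n) by (unfold dn in Hd0; lra).
        assert (0 <= (Q + INR (n - i))^2) by (apply pow_le; lra).
        apply Rle_trans with (2 * Q ^ 2 * u ^ 2 * (Q + INR (n - i)) ^ 2); [apply Rmult_le_compat_r; lra|].
        apply Rle_trans with (PI ^ 2 / 4 * Q ^ 2 * (8 / PI ^ 2 * (Q + INR (n - i)) ^ 2 * u ^ 2)).
        { right. field. lra. }
        apply Rmult_le_compat_l; [|lra]. apply Rmult_le_pos; [|apply pow_le; lra].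
        apply Rdiv_le_0_compat; [apply pow_le; lra| lra].
    + apply sum_nonneg. intros i hi. rewrite Habs by auto. specialize (Hd i hi). left; apply Rdiv_lt_0_compat; lra.
  - assert (Sg : sum_f_R0 g n <= 1 + PI^2/4 * Q).
    { set (F := fun i : nat => if le_dec i n then PI^2/4 * Q^2 / (Q + INR (n - i)) else 1 + PI^2/4 * Q).
      assert (Fl : forall i, (i <= n)%nat -> F i = PI^2/4 * Q^2 / (Q + INR (n - i))) by (intros i hi; unfold F; destruct (le_dec i n); [reflexivity|lia]).
      assert (Fg : F (S n) = 1 + PI^2/4 * Q) by (unfold F; destruct (le_dec (S n) n); [lia|reflexivity]).
      assert (0 <= PI^2/4) by (apply Rdiv_le_0_compat; [apply pow_le; lra|lra]).
      apply Rle_trans with (F (S n) - F 0%nat).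
      - apply telescope. intros i hi. destruct (Nat.eq_dec i n) as [->|ne].
        + rewrite g0, Fg, Fl by lia. rewrite Nat.sub_diag. simpl INR. replace (PI^2/4*Q^2/(Q+0)) with (PI^2/4*Q) by (field; lra). lra.
        + rewrite (gi i ne), Fl, Fl by lia.
          assert (E : INR (n - i) = INR (n - S i) + 1) by (rewrite <- S_INR; f_equal; lia).
          rewrite E. assert (0 <= INR (n - S i)) by apply pos_INR.
          set (m := Q + INR (n - S i)). replace (Q + (INR (n - S i) + 1)) with (m + 1) by (unfold m; ring).
          assert (1 <= m) by (unfold m; lra).
          apply Rle_trans with (PI^2/4 * Q^2 / (m * (m + 1))).
          * apply div_le. apply pow_lt; lra. nra.
            assert (0 <= PI^2/4 * Q^2) by (apply Rmult_le_pos; [lra|apply pow_le; lra]).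
            assert (m * (m + 1) <= (m + 1)^2) by nra. nra.
          * right. field. split; lra.
      - rewrite Fg, Fl by lia.
        assert (0 <= Q^2 / (Q + INR (n - 0))).
        { apply Rdiv_le_0_compat; [apply pow_le; lra|]. assert (0 <= INR (n - 0)) by apply pos_INR. lra. }
        nra. }
    assert (Hdh : d1 / h0 <= 1 + PI^2/4 * Q^2).
    { rewrite Hd1. assert (dn <= 1 + x n) by (unfold dn; lra).
      replace ((dn + h0) / h0) with (1 + dn / h0) by (field; lra).
      assert (dn / h0 <= PI ^ 2 / 4 * Q ^ 2 / 1).
      { apply div_le; [lra|lra|].
        apply Rle_trans with (2 * Q ^ 2 * u ^ 2); [lra|].
        apply Rle_trans with (PI ^ 2 / 4 * Q ^ 2 * (8 / PI ^ 2 * u ^ 2)); [right; field; lra|].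
        apply Rmult_le_compat_l; [|lra]. apply Rmult_le_pos; [apply Rdiv_le_0_compat;[apply pow_le; lra|lra]|apply pow_le; lra]. }
      lra. }
    assert (0 <= sum_f_R0 g n).
    { apply sum_nonneg. intros i hi. destruct (Nat.eq_dec i n) as [->|ne]; [rewrite g0; lra|]. rewrite (gi i ne).
      apply Rdiv_le_0_compat; [apply Rmult_le_pos; [apply Rdiv_le_0_compat;[apply pow_le; lra|lra]|apply pow_le; lra]|].
      apply pow_lt. assert (0 <= INR (n - i)) by apply pos_INR. lra. }
    replace (sum_f_R0 g n / (h0 / d1)) with (sum_f_R0 g n * (d1 / h0)) by (field; lra).
    assert (0 <= PI^2/4) by (apply Rdiv_le_0_compat; [apply pow_le; lra|lra]).
    assert (Q^2 <= INR s ^ 2) by nra.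
    assert (d1 / h0 <= 1 + PI^2/4 * INR s ^ 2) by nra.
    assert (sum_f_R0 g n <= 1 + PI^2/4 * INR s) by nra.
    assert (0 <= d1 / h0) by (apply Rdiv_le_0_compat; lra).
    rewrite Rmult_comm. apply Rmult_le_compat; lra.
Qed.

Definition gam (k : nat) (a b C : R) (i : nat) : R :=
  if lt_dec i k then C / INR (k + 1 - i)
  else if Nat.eq_dec i k then a
  else if Nat.eq_dec i (S k) then b
  else C / INR (i - k).

Lemma gam_sum k n a b C : (k < n)%nat -> 0 <= C ->
  sum_f_R0 (gam k a b C) n <= a + b + C * ln (INR (k + 1)) + C * ln (INR (n - k)).
Proof.
  intros Hk HC.
  set (F := fun i => if le_dec i k then - C * ln (INR (k + 1 - i))
                     else if Nat.eq_dec i (S k) then a else a + b + C * ln (INR (i - 1 - k))).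
  assert (Fle : forall i, (i <= k)%nat -> F i = - C * ln (INR (k + 1 - i)))
    by (intros i hi; unfold F; destruct (le_dec i k); [reflexivity|lia]).
  assert (FSk : F (S k) = a) by (unfold F; destruct (le_dec (S k) k); [lia|]; destruct (Nat.eq_dec (S k) (S k)); [reflexivity|lia]).
  assert (Fgt : forall i, (S (S k) <= i)%nat -> F i = a + b + C * ln (INR (i - 1 - k)))
    by (intros i hi; unfold F; destruct (le_dec i k); [lia|]; destruct (Nat.eq_dec i (S k)); [lia|reflexivity]).
  assert (harm : forall m, (2 <= m)%nat -> C / INR m <= C * (ln (INR m) - ln (INR (m - 1)))).
  { intros m hm. assert (2 <= INR m) by (apply (le_INR 2) in hm; simpl in hm; lra).
    rewrite minus_INR by lia. simpl (INR 1).
    assert (Hh := harm_ln (INR m) H). unfold Rdiv. replace (C * / INR m) with (C * (1 / INR m)) by (field; lra).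
    apply Rmult_le_compat_l; lra. }
  apply Rle_trans with (F (S n) - F 0%nat).
  - apply telescope. intros i hi. unfold gam.
    destruct (lt_dec i k) as [h1|h1].
    + rewrite !Fle by lia. replace (k + 1 - S i)%nat with (k + 1 - i - 1)%nat by lia.
      assert (Hm := harm (k + 1 - i)%nat ltac:(lia)). lra.
    + destruct (Nat.eq_dec i k) as [->|h2].
      * rewrite FSk, Fle by lia. replace (k + 1 - k)%nat with 1%nat by lia. simpl INR. rewrite ln_1. lra.
      * destruct (Nat.eq_dec i (S k)) as [->|h3].
        -- rewrite FSk, Fgt by lia. replace (S (S k) - 1 - k)%nat with 1%nat by lia. simpl INR. rewrite ln_1. lra.
        -- rewrite !Fgt by lia. replace (S i - 1 - k)%nat with (i - k)%nat by lia.
           replace (i - 1 - k)%nat with (i - k - 1)%nat by lia.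
           assert (Hm := harm (i - k)%nat ltac:(lia)). lra.
  - rewrite Fgt, Fle by lia. replace (S n - 1 - k)%nat with (n - k)%nat by lia. rewrite Nat.sub_0_r. lra.
Qed.

Lemma lowA d h' R : 0 < d -> 0 < h' -> 0 <= R -> d <= R / 2 * h' -> (1 / (1 + R / 2)) / d <= 1 / d - 1 / (d + h').
Proof.
  intros. replace (1 / d - 1 / (d + h')) with (h' / (d * (d + h'))) by (field; lra).
  replace ((1 / (1 + R / 2)) / d) with (2 / ((2 + R) * d)) by (field; lra).
  apply div_le. nra. nra. nra.
Qed.

Lemma gam_lt k a b C i : (i < k)%nat -> gam k a b C i = C / INR (k + 1 - i).
Proof. intros. unfold gam. destruct (lt_dec i k); [reflexivity|lia]. Qed.
Lemma gam_k k a b C : gam k a b C k = a.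
Proof. unfold gam. destruct (lt_dec k k); [lia|]. destruct (Nat.eq_dec k k); [reflexivity|lia]. Qed.
Lemma gam_Sk k a b C : gam k a b C (S k) = b.
Proof. unfold gam. destruct (lt_dec (S k) k); [lia|]. destruct (Nat.eq_dec (S k) k); [lia|].
  destruct (Nat.eq_dec (S k) (S k)); [reflexivity|lia]. Qed.
Lemma gam_gt k a b C i : (S (S k) <= i)%nat -> gam k a b C i = C / INR (i - k).
Proof. intros. unfold gam. destruct (lt_dec i k); [lia|]. destruct (Nat.eq_dec i k); [lia|].
  destruct (Nat.eq_dec i (S k)); [lia|reflexivity]. Qed.

Lemma caseI N s x p t k : hyp N s x p -> (k < N - s)%nat -> x (S k) < t -> t < x k ->
  sum_f_R0 (fun i => 1 / Rabs (t - x i)) (N - s) /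
    Rabs (sum_f_R0 (fun j => (-1) ^ j / (t - x j)) (N - s))
   <= (1 + (INR s + 1) * (INR s + 3) * PI ^ 2 / 4 / 2) *
      (1 + PI ^ 2 * (INR s + 1) / 2 + PI ^ 2 * (INR s + 1) / 2 * ln (INR (k + 1))
         + PI ^ 2 * (INR s + 1) / 2 * ln (INR (N - s - k))).
Proof.
  intros H Hk Ht1 Ht2. set (n := (N - s)%nat) in *.
  set (C := PI ^ 2 * (INR s + 1) / 2). set (Rc := (INR s + 1) * (INR s + 3) * PI ^ 2 / 4).
  assert (HN : (s + 2 < N)%nat) by (destruct H; lia).
  assert (HP := PI_gt_3). assert (Hs0 : 0 <= INR s) by apply pos_INR.
  assert (HC : 0 <= C) by (unfold C; assert (0 < PI^2) by nra; nra).
  assert (HRc : 0 <= Rc) by (unfold Rc; assert (0 < PI^2) by nra; nra).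
  assert (Hl : forall i, (i <= k)%nat -> x k <= x i) by (intros i hi; apply (x_mono N s x p i k H); unfold n in *; lia).
  assert (Hr : forall i, (S k <= i <= n)%nat -> x i <= x (S k)) by (intros i hi; apply (x_mono N s x p (S k) i H); unfold n in *; lia).
  assert (Habl : forall i, (i <= k)%nat -> Rabs (t - x i) = x i - t).
  { intros i hi. rewrite Rabs_left; [ring|]. specialize (Hl i hi); lra. }
  assert (Habr : forall i, (S k <= i <= n)%nat -> Rabs (t - x i) = t - x i).
  { intros i hi. apply Rabs_right. specialize (Hr i hi); lra. }
  set (h := x k - x (S k)).
  assert (Hh : 0 < h) by (unfold h; lra).
  assert (c1 : forall j, (j <= k)%nat -> h / (x j - x (S k)) <= C / INR (k + 1 - j)).
  { intros j hj. assert (Hc := cond1 N s x p H k j ltac:(unfold n in *; lia) hj). fold C in Hc.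
    assert (x (S k) < x j) by (specialize (Hl j hj); lra).
    replace (h / (x j - x (S k))) with ((x (S k) - x k) / (x (S k) - x j)) by (unfold h; field; lra). exact Hc. }
  assert (c2 : forall j, (S k <= j <= n)%nat -> h / (x k - x j) <= C / INR (j - k)).
  { intros j hj. assert (Hc := cond2 N s x p H k j ltac:(unfold n in *; lia) ltac:(lia) ltac:(unfold n in *; lia)). fold C in Hc.
    assert (x j < x k) by (specialize (Hr j hj); lra).
    replace (h / (x k - x j)) with ((x (S k) - x k) / (x j - x k)) by (unfold h; field; lra). exact Hc. }
  set (a := fun j => 1 / (x j - t)).
  set (b := fun i => 1 / (t - x (S k + i)%nat)).
  destruct (alt_inc a k) as [[A0 A1] A2].
  { intros i hi. unfold a. assert (Hx := x_mono N s x p i (S i) H ltac:(lia) ltac:(unfold n in *; lia)).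
    assert (0 < x (S i) - t) by (specialize (Hl (S i) ltac:(lia)); lra).
    unfold Rdiv; rewrite !Rmult_1_l. apply Rinv_le_contravar; lra. }
  { intros i hi. unfold a. specialize (Hl i hi). left; apply Rdiv_lt_0_compat; lra. }
  destruct (alt_dec (n - S k) b) as [[B0 B1] B2].
  { intros i hi. unfold b. assert (Hx := x_mono N s x p (S k + i) (S k + S i) H ltac:(lia) ltac:(unfold n in *; lia)).
    assert (0 < t - x (S k + i)%nat) by (specialize (Hr (S k + i)%nat ltac:(unfold n in *; lia)); lra).
    unfold Rdiv; rewrite !Rmult_1_l. apply Rinv_le_contravar; lra. }
  { intros i hi. unfold b. assert (0 < t - x (S k + i)%nat) by (specialize (Hr (S k + i)%nat ltac:(unfold n in *; lia)); lra).
    left; apply Rdiv_lt_0_compat; lra. }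
  set (SA := sum_f_R0 (fun i => (-1) ^ i * a i) k) in *.
  set (SB := sum_f_R0 (fun i => (-1) ^ i * b i) (n - S k)) in *.
  assert (HD : Rabs (sum_f_R0 (fun j => (-1) ^ j / (t - x j)) n) = (-1) ^ k * SA + SB).
  { rewrite (tech2 _ k n Hk).
    assert (L : sum_f_R0 (fun j => (-1) ^ j / (t - x j)) k = - SA).
    { unfold SA. rewrite <- (Rmult_1_l (sum_f_R0 (fun i => (-1) ^ i * a i) k)).
      rewrite Ropp_mult_distr_l, scal_sum. apply sum_eq; intros; unfold a; field.
      specialize (Hl i H0); lra. }
    assert (R : sum_f_R0 (fun i => (-1) ^ (S k + i) / (t - x (S k + i)%nat)) (n - S k) = (-1) ^ (S k) * SB).
    { unfold SB. rewrite scal_sum. apply sum_eq; intros; unfold b. rewrite pow_add. field.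
      specialize (Hr (S k + i)%nat ltac:(unfold n in *; lia)); lra. }
    rewrite L, R. assert (E : SA = (-1) ^ k * ((-1) ^ k * SA)) by (rewrite <- Rmult_assoc, pow_m1_sq; ring).
    rewrite E. simpl pow.
    replace (- ((-1) ^ k * ((-1) ^ k * SA)) + -1 * (-1) ^ k * SB) with ((-1) ^ k * (- ((-1) ^ k * SA + SB))) by ring.
    rewrite Rabs_mult, pow_1_abs, Rabs_Ropp, Rmult_1_l. rewrite <- E. apply Rabs_right. lra. }
  rewrite HD. fold n.
  set (dk := x k - t). set (dk1 := t - x (S k)).
  assert (Hdk : 0 < dk) by (unfold dk; lra). assert (Hdk1 : 0 < dk1) by (unfold dk1; lra).
  assert (Hsum : dk + dk1 = h) by (unfold dk, dk1, h; ring).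
  assert (HcRc : 0 < 1 / (1 + Rc / 2)) by (apply Rdiv_lt_0_compat; lra).
  assert (Hnum0 : 0 <= sum_f_R0 (fun i => 1 / Rabs (t - x i)) n).
  { apply sum_nonneg. intros i hi. apply Rdiv_le_0_compat; [lra|]. apply Rabs_pos_lt.
    destruct (le_lt_dec i k). specialize (Hl i l); lra. specialize (Hr i ltac:(lia)); lra. }
  assert (Hpos : forall i, (i <= n)%nat -> 0 < Rabs (t - x i)).
  { intros i hi. apply Rabs_pos_lt. destruct (le_lt_dec i k). specialize (Hl i l); lra. specialize (Hr i ltac:(lia)); lra. }
  assert (Hfin : forall a0 b0, a0 + b0 = 1 + C ->
    sum_f_R0 (gam k a0 b0 C) n / (1 / (1 + Rc / 2)) <=
    (1 + Rc / 2) * (1 + C + C * ln (INR (k + 1)) + C * ln (INR (n - k)))).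
  { intros a0 b0 Hab. assert (G := gam_sum k n a0 b0 C Hk HC).
    replace (sum_f_R0 (gam k a0 b0 C) n / (1 / (1 + Rc / 2))) with ((1 + Rc/2) * sum_f_R0 (gam k a0 b0 C) n) by (field; lra).
    apply Rmult_le_compat_l; lra. }
  destruct (Rle_dec dk dk1) as [Hc|Hc].
  -
    assert (Hdh : dk <= h / 2) by lra.
    apply Rle_trans with (sum_f_R0 (gam k 1 C C) n / (1 / (1 + Rc / 2))); [|apply Hfin; ring].
    apply (final_ratio _ _ dk); try lra.
    + assert (1 / (1 + Rc / 2) / dk <= (-1) ^ k * SA); [|lra].
      destruct k as [|k'].
      * assert (E : (-1)^0 * SA = 1/dk) by (unfold SA, a, dk; simpl; ring). rewrite E.
        assert (1/(1+Rc/2) <= 1) by (unfold Rdiv; rewrite Rmult_1_l; rewrite <- Rinv_1; apply Rinv_le_contravar; lra).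
        apply div_le; [lra|lra|]. nra.
      * specialize (A2 ltac:(lia)). eapply Rle_trans; [|exact A2].
        unfold a. replace (S k' - 1)%nat with k' by lia. fold dk.
        set (h' := x k' - x (S k')).
        assert (Hc3 := cond3 N s x p H (S k') ltac:(lia) ltac:(unfold n in *; lia)).
        replace (S k' - 1)%nat with k' in Hc3 by lia. fold Rc in Hc3. destruct Hc3 as [_ Hc3].
        assert (Hh' : 0 < h') by (unfold h'; assert (Hx := x_strict N s x p k' (S k') H ltac:(lia) ltac:(unfold n in *; lia)); lra).
        replace ((x (S (S k')) - x (S k')) / (x (S k') - x k')) with (h / h') in Hc3 by (unfold h, h' in *; field; lra).
        assert (h <= Rc * h') by (apply Rmult_le_reg_r with (/ h'); [apply Rinv_0_lt_compat; lra|];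
                                  replace (Rc * h' * / h') with Rc by (field; lra); exact Hc3).
        replace (x k' - t) with (dk + h') by (unfold dk, h'; ring).
        apply lowA; lra.
    + apply num_bound; [lra|exact Hpos|]. intros i hi.
      destruct (lt_dec i k) as [h1|h1].
      * rewrite gam_lt by lia. rewrite Habl by lia. eapply Rle_trans; [|apply (c1 i ltac:(lia))].
        replace (x i - t) with ((x i - x k) + dk) by (unfold dk; ring).
        replace (x i - x (S k)) with ((x i - x k) + h) by (unfold h; ring).
        apply shapeA; try lra. specialize (Hl i ltac:(lia)); lra.
      * destruct (Nat.eq_dec i k) as [->|h2].
        -- rewrite gam_k, Habl by lia. fold dk. right; field; lra.
        -- assert (Hgi : gam k 1 C C i = C / INR (i - k)).
           { destruct (Nat.eq_dec i (S k)) as [->|h3].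
             - rewrite gam_Sk. replace (S k - k)%nat with 1%nat by lia. simpl INR. field.
             - apply gam_gt; lia. }
           rewrite Hgi, Habr by lia. eapply Rle_trans; [|apply (c2 i ltac:(lia))].
           replace (t - x i) with ((x k - x i) - dk) by (unfold dk; ring).
           apply shapeB; try lra. assert (x i <= x (S k)) by (apply Hr; lia). unfold h in *; lra.
  -
    assert (Hdh : dk1 <= h / 2) by lra.
    apply Rle_trans with (sum_f_R0 (gam k C 1 C) n / (1 / (1 + Rc / 2))); [|apply Hfin; ring].
    apply (final_ratio _ _ dk1); try lra.
    + assert (1 / (1 + Rc / 2) / dk1 <= SB); [|lra].
      destruct (Nat.eq_dec (n - S k) 0) as [E|E].
      * assert (E' : SB = 1/dk1) by (unfold SB, b, dk1; rewrite E; simpl; rewrite Nat.add_0_r; ring). rewrite E'.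
        assert (1/(1+Rc/2) <= 1) by (unfold Rdiv; rewrite Rmult_1_l; rewrite <- Rinv_1; apply Rinv_le_contravar; lra).
        apply div_le; [lra|lra|]. nra.
      * specialize (B2 ltac:(lia)). eapply Rle_trans; [|exact B2].
        unfold b. rewrite Nat.add_0_r. replace (S k + 1)%nat with (S (S k)) by lia. fold dk1.
        set (h'' := x (S k) - x (S (S k))).
        assert (Hc3 := cond3 N s x p H (S k) ltac:(lia) ltac:(unfold n in *; lia)).
        replace (S k - 1)%nat with k in Hc3 by lia. fold Rc in Hc3. destruct Hc3 as [Hc3 _].
        assert (Hh'' : 0 < h'') by (unfold h''; assert (Hx := x_strict N s x p (S k) (S (S k)) H ltac:(lia) ltac:(unfold n in *; lia)); lra).
        replace ((x (S (S k)) - x (S k)) / (x (S k) - x k)) with (h'' / h) in Hc3 by (unfold h, h'' in *; field; lra).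
        assert (h <= Rc * h'').
        { assert (0 < Rc) by (unfold Rc; assert (0 < PI^2) by nra; nra).
          assert (1 / Rc * h <= h'' / h * h) by (apply Rmult_le_compat_r; lra).
          replace (h'' / h * h) with h'' in H1 by (field; lra).
          apply Rmult_le_reg_l with (1 / Rc). apply Rdiv_lt_0_compat; lra.
          replace (1 / Rc * (Rc * h'')) with h'' by (field; lra). lra. }
        replace (t - x (S (S k))) with (dk1 + h'') by (unfold dk1, h''; ring).
        apply lowA; lra.
    + apply num_bound; [lra|exact Hpos|]. intros i hi.
      destruct (le_lt_dec i k) as [h1|h1].
      * assert (Hgi : gam k C 1 C i = C / INR (k + 1 - i)).
        { destruct (Nat.eq_dec i k) as [->|h3].
          - rewrite gam_k. replace (k + 1 - k)%nat with 1%nat by lia. simpl INR. field.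
          - apply gam_lt; lia. }
        rewrite Hgi, Habl by lia. eapply Rle_trans; [|apply (c1 i ltac:(lia))].
        replace (x i - t) with ((x i - x (S k)) - dk1) by (unfold dk1; ring).
        apply shapeB; try lra. specialize (Hl i ltac:(lia)). unfold h in *; lra.
      * destruct (Nat.eq_dec i (S k)) as [->|h2].
        -- rewrite gam_Sk, Habr by lia. fold dk1. right; field; lra.
        -- rewrite gam_gt, Habr by lia. eapply Rle_trans; [|apply (c2 i ltac:(lia))].
           replace (t - x i) with ((x (S k) - x i) + dk1) by (unfold dk1; ring).
           replace (x k - x i) with ((x (S k) - x i) + h) by (unfold h; ring).
           apply shapeA; try lra. assert (x i <= x (S k)) by (apply Hr; lia). lra.
Qed.

Lemma find_k (x : nat -> R) n t : (forall i, (i <= n)%nat -> t <> x i) -> t < x 0%nat ->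
  forall m, (m <= n)%nat -> t < x m \/ exists k, (k < m)%nat /\ x (S k) < t /\ t < x k.
Proof.
  intros Hn H0. induction m as [|m IH]; intros hm.
  - left; exact H0.
  - destruct (IH ltac:(lia)) as [h|[k [hk hh]]].
    + destruct (Rtotal_order t (x (S m))) as [h1|[h1|h1]].
      * left; exact h1.
      * exfalso; apply (Hn (S m) hm h1).
      * right. exists m. split; [lia|]. split; assumption.
    + right. exists k. split; [lia|exact hh].
Qed.

Theorem theorem7 (s N : nat) (x : nat -> R) :
  (s + 2 < N)%nat ->
  (forall j, (j <= N - s)%nat ->
     exists k, (k <= N)%nat /\ x j = cos (INR k * PI / INR N)) ->
  (forall j, (j < N - s)%nat -> x (S j) < x j) ->
  let n := (N - s)%nat in
  let C := PI ^ 2 * (INR s + 1) / 2 in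
  let Rc := (INR s + 1) * (INR s + 3) * PI ^ 2 / 4 in
  (forall k j, (k <= n - 1)%nat -> (j <= k)%nat ->
     (x (S k) - x k) / (x (S k) - x j) <= C / INR (k + 1 - j)) /\
  (forall k j, (k <= n - 1)%nat -> (k + 1 <= j)%nat -> (j <= n)%nat ->
     (x (S k) - x k) / (x j - x k) <= C / INR (j - k)) /\
  (forall k, (1 <= k)%nat -> (k <= n - 1)%nat ->
     1 / Rc <= (x (S k) - x k) / (x k - x (k - 1)%nat) /\
     (x (S k) - x k) / (x k - x (k - 1)%nat) <= Rc) /\
  Rbar_le (lebesgue_constant x n)
    (Finite ((Rc + 1) * (1 + PI ^ 2 * (INR s + 1) * ln (INR (N - s))))).
Proof.
  intros HsN Hx Hord n C Rc.
  destruct (get_p s N x HsN Hx Hord) as [p H].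
  split; [exact (cond1 N s x p H)|].
  split; [exact (cond2 N s x p H)|].
  split; [exact (cond3 N s x p H)|].
  unfold lebesgue_constant. apply lub_le. intros y [t [Ht ->]].
  destruct Ht as [Ht1 Ht2]. assert (HP := PI_gt_3). assert (Hs0 : 0 <= INR s) by apply pos_INR.
  assert (HPI2 : 0 < PI ^ 2) by nra.
  set (L := ln (INR (N - s))).
  assert (HL : 1 <= L).
  { unfold L. apply Rle_trans with (ln 3); [apply ln3|]. apply ln_le; [lra|].
    replace 3 with (INR 3) by (simpl; ring). apply le_INR; lia. }
  assert (HRc : 2 <= Rc) by (unfold Rc; nra).
  assert (HC : 0 <= C) by (unfold C; nra).
  assert (Ebound : (1 + PI^2/4 * INR s ^ 2) * (1 + PI^2/4 * INR s) <= (Rc + 1) * (1 + PI ^ 2 * (INR s + 1) * L)).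
  { assert (1 + PI^2/4 * INR s ^ 2 <= Rc + 1) by (unfold Rc; nra).
    assert (1 + PI^2/4 * INR s <= 1 + PI ^ 2 * (INR s + 1) * L).
    { assert (PI^2/4 * INR s <= PI^2 * (INR s + 1) * 1) by nra.
      assert (PI^2 * (INR s + 1) * 1 <= PI^2 * (INR s + 1) * L) by (apply Rmult_le_compat_l; nra). lra. }
    apply Rmult_le_compat; try lra. assert (0 <= PI^2/4 * INR s ^ 2) by (apply Rmult_le_pos; nra). lra.
    assert (0 <= PI^2/4 * INR s) by (apply Rmult_le_pos; nra). lra. }
  destruct (classic (exists m, (m <= n)%nat /\ t = x m)) as [[m [hm ->]]|Hnn].
  - rewrite (leb_node x n m); auto.
    + assert (0 <= PI ^ 2 * (INR s + 1) * L) by (apply Rmult_le_pos; nra). nra.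
    + intros i j hij. apply (x_strict N s x p i j H); unfold n in *; lia.
  - assert (Hn : forall i, (i <= n)%nat -> t <> x i) by (intros i hi E; apply Hnn; exists i; auto).
    rewrite (leb_nonnode x n t Hn).
    destruct (Rlt_dec (x 0%nat) t) as [h0|h0].
    + eapply Rle_trans; [apply (caseE1 N s x p t H); lra|]. exact Ebound.
    + destruct (Rlt_dec t (x n)) as [hn|hn].
      * apply Rle_trans with ((1 + PI^2/4 * INR s ^ 2) * (1 + PI^2/4 * INR s)); [|exact Ebound].
        apply (caseE2 N s x p t H); [lra|exact hn].
      * assert (t < x 0%nat) by (assert (t <> x 0%nat) by (apply Hn; lia); lra).
        assert (x n < t) by (assert (t <> x n) by (apply Hn; lia); lra).
        destruct (find_k x n t Hn H0 n (le_n n)) as [hh|[k [hk [hk1 hk2]]]]; [lra|].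
        eapply Rle_trans; [apply (caseI N s x p t k H); unfold n in *; auto|].
        fold C Rc. fold n. replace (N - s - k)%nat with (n - k)%nat by reflexivity.
        assert (l1 : ln (INR (k + 1)) <= L).
        { unfold L. apply ln_le. replace 0 with (INR 0) by reflexivity. apply lt_INR; lia. apply le_INR; unfold n in *; lia. }
        assert (l2 : ln (INR (n - k)) <= L).
        { unfold L. apply ln_le. replace 0 with (INR 0) by reflexivity. apply lt_INR; lia. apply le_INR; unfold n in *; lia. }
        replace (PI ^ 2 * (INR s + 1)) with (2 * C) by (unfold C; field).
        assert (C * ln (INR (k + 1)) + C * ln (INR (n - k)) <= 2 * C * L) by nra.
        assert (0 <= 1 + C + C * ln (INR (k + 1)) + C * ln (INR (n - k))).
        { assert (0 <= ln (INR (k+1))) by (rewrite <- ln_1; apply ln_le; [lra|]; apply (le_INR 1); lia).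
          assert (0 <= ln (INR (n - k))) by (rewrite <- ln_1; apply ln_le; [lra|]; apply (le_INR 1); lia). nra. }
        apply Rle_trans with ((1 + Rc / 2) * (1 + C + 2 * C * L)).
        { apply Rmult_le_compat_l; lra. }
        assert (Rc * C * (L - 1) >= 0) by (apply Rle_ge; apply Rmult_le_pos; [apply Rmult_le_pos|]; lra). assert (C * (Rc/2 - 1) >= 0) by (apply Rle_ge, Rmult_le_pos; lra). nra.
Qed.
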